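(* For every $n\ge1$, the half space $\mathbb R^n_+=\{x\in\mathbb R^n:x_n\ge0\}$ is isomorphic in the category $\tilde{\mathcal A}$ to the orthant $(\mathbb R_+)^n=[0,\infty)^n\subset\mathbb R^n$; both carry the metric induced from the Euclidean metric of $\mathbb R^n$ and base point the origin. That is, there is a homeomorphism $T:(\mathbb R_+)^n\to\mathbb R^n_+$ such that both $T$ and $T^{-1}$ are morphisms of $\tilde{\mathcal A}$.
   Context: A map $f:X\to Y$ of metric spaces is asymptotically Lipschitz if there are $\lambda,s\ge0$ with $d_Y(f(x),f(x'))\le\lambda d_X(x,x')+s$. Morphisms of $\tilde{\mathcal A}$ between proper metric spaces with base points $x_0,y_0$ are continuous maps that are proper (preimages of compact sets compact), asymptotically Lipschitz, and have nonzero norm: there exist $c>0$, $b\ge 0$ with $d_Y(f(x),y_0)\ge c\,d_X(x,x_0)-b$ for all $x$. *)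

(* Defs.v *)
From HB Require Import structures.
From mathcomp Require Import all_boot all_order all_algebra.
From mathcomp Require Import all_classical all_reals all_analysis.
Set Implicit Arguments. Unset Strict Implicit. Unset Printing Implicit Defensive.
Import Order.TTheory GRing.Theory Num.Theory.
Import numFieldNormedType.Exports.
Local Open Scope classical_set_scope.
Local Open Scope ring_scope.

(* The topology used for continuity and
   compactness is MathComp-Analysis' canonical topology on 'rV[R]_n
   (the product topology), which is the topology of the Euclidean metric. *)

Definition eucl_dist (R : realType) (n : nat) (x y : 'rV[R]_n) : R :=
  Num.sqrt (\sum_(i < n) (x ord0 i - y ord0 i) ^+ 2).

Definition half_space (R : realType) (n : nat) : set 'rV[R]_n.+1 :=
  [set x | 0 <= x ord0 ord_max].

Definition orthant (R : realType) (n : nat) : set 'rV[R]_n :=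
  [set x | forall i, 0 <= x ord0 i].

Definition At_morphism (R : realType) (m n : nat)
    (X : set 'rV[R]_m) (Y : set 'rV[R]_n) (f : 'rV[R]_m -> 'rV[R]_n) : Prop :=
  [/\ (forall x, X x -> Y (f x)),
      {within X, continuous f},
      (forall K : set 'rV[R]_n, K `<=` Y -> compact K ->
          compact (X `&` f @^-1` K)),
      (exists lam s : R, [/\ 0 <= lam, 0 <= s &
          forall x x', X x -> X x' ->
            eucl_dist (f x) (f x') <= lam * eucl_dist x x' + s]) &
      (* nonzero norm, base points 0 *)
      (exists c b : R, [/\ 0 < c, 0 <= b &
          forall x, X x -> c * eucl_dist x 0 - b <= eucl_dist (f x) 0])].

(* Main.v *)
Require Import Defs.
From HB Require Import structures.
From mathcomp Require Import all_boot all_order all_algebra.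
From mathcomp Require Import all_classical all_reals all_analysis.
From mathcomp Require Import ring lra.
Import Order.TTheory GRing.Theory Num.Theory.
Import numFieldNormedType.Exports.
Local Open Scope classical_set_scope.
Local Open Scope ring_scope.

Set Implicit Arguments. Unset Strict Implicit.
Section Aux.
Variable R : realType.

Lemma abs_le (u v : R) : u <= v -> - u <= v -> `|u| <= v.
Proof. by move=> h1 h2; rewrite ler_norml h1 andbT lerNl. Qed.

Lemma absP (u : R) : u <= `|u| /\ - u <= `|u|.
Proof. by split; [exact: ler_norm | rewrite -normrN; exact: ler_norm]. Qed.

Lemma min_lip (a b a' b' M : R) : `|a - a'| <= M -> `|b - b'| <= M ->
  `|Num.min a b - Num.min a' b'| <= M.
Proof.
move=> ha hb; have [h1 h2] := absP (a - a'); have [h3 h4] := absP (b - b').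
apply: abs_le; case: (leP a b) => hab; case: (leP a' b') => hab'; lra.
Qed.

Lemma bigmin_le (I : eqType) (r : seq I) (P : pred I) (F : I -> R) j :
  j \in r -> P j -> \big[Num.min/0]_(i <- r | P i) F i <= F j.
Proof.
elim: r => // a r IH; rewrite in_cons big_cons => /orP [/eqP <- | jr] Pj.
  by rewrite Pj ge_min lexx.
case: ifP => _; last exact: IH.
by rewrite ge_min (IH jr Pj) orbT.
Qed.

Lemma bigmin_le0 (I : Type) (r : seq I) (P : pred I) (F : I -> R) :
  \big[Num.min/0]_(i <- r | P i) F i <= 0.
Proof.
elim: r => [|a r IH]; first by rewrite big_nil.
rewrite big_cons; case: ifP => // _.
by rewrite ge_min IH orbT.
Qed.

Lemma sumsq_le (I : Type) (r : seq I) (F : I -> R) : (forall i, 0 <= F i) ->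
  \sum_(i <- r) F i ^+ 2 <= (\sum_(i <- r) F i) ^+ 2.
Proof.
move=> F0; elim: r => [|a r IH]; first by rewrite !big_nil expr0n.
rewrite !big_cons.
have S0 : 0 <= \sum_(i <- r) F i by apply: sumr_ge0.
have := F0 a; nra.
Qed.

Variable m : nat.
Implicit Types x y : 'rV[R]_m.

Lemma ed_ge0 x y : 0 <= eucl_dist x y.
Proof. exact: sqrtr_ge0. Qed.

Lemma ed_coord x y i : `|x ord0 i - y ord0 i| <= eucl_dist x y.
Proof.
rewrite /eucl_dist -sqrtr_sqr; apply: ler_wsqrtr.
rewrite (bigD1 i) //= lerDl; apply: sumr_ge0 => j _; exact: sqr_ge0.
Qed.

Lemma ed_le_sum x y : eucl_dist x y <= \sum_i `|x ord0 i - y ord0 i|.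
Proof.
have S0 : 0 <= \sum_i `|x ord0 i - y ord0 i| by apply: sumr_ge0.
rewrite /eucl_dist -(ger0_norm S0) -sqrtr_sqr; apply: ler_wsqrtr.
rewrite (eq_bigr (fun i => `|x ord0 i - y ord0 i| ^+ 2)); last first.
  by move=> i _; rewrite real_normK // num_real.
exact: sumsq_le.
Qed.

Lemma ed_le_const x y M : (forall i, `|x ord0 i - y ord0 i| <= M) ->
  eucl_dist x y <= m%:R * M.
Proof.
move=> H; apply: le_trans (ed_le_sum _ _) _.
apply: le_trans (ler_sum _ (fun i _ => H i)) _.
by rewrite sumr_const card_ord mulr_natl.
Qed.

Lemma entry_le_norm x i : `|x ord0 i| <= `|x|.
Proof.
rewrite (_ : `|x| = mx_norm x) // mx_normrE; apply/bigmax_geP; right => /=.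
by exists (ord0, i).
Qed.

Lemma norm_le_entries x M : 0 <= M -> (forall i, `|x ord0 i| <= M) -> `|x| <= M.
Proof.
move=> M0 H; rewrite (_ : `|x| = mx_norm x) // mx_normrE; apply/bigmax_leP.
split => // -[a b] _ /=; rewrite (ord1 a); exact: H.
Qed.

Lemma norm_le_ed x y : `|x - y| <= eucl_dist x y.
Proof.
apply: norm_le_entries; first exact: ed_ge0.
by move=> i; rewrite !mxE; exact: ed_coord.
Qed.

Lemma ed_le_norm x y : eucl_dist x y <= m%:R * `|x - y|.
Proof.
apply: ed_le_const => i.
have := entry_le_norm (x - y) i; by rewrite !mxE.
Qed.

End Aux.

Section Gen.
Variable R : realType.
Variable m : nat.
Implicit Types x y : 'rV[R]_m.

Lemma lip_cont (f : 'rV[R]_m -> 'rV[R]_m) L : 0 <= L ->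
  (forall x y, eucl_dist (f x) (f y) <= L * eucl_dist x y) -> continuous f.
Proof.
move=> L0 Hf.
have K0 : 0 < L * m%:R + 1 by rewrite ltr_wpDl // mulr_ge0.
have Hn : forall x y, `|f x - f y| <= (L * m%:R + 1) * `|x - y|.
  move=> x y; apply: le_trans (norm_le_ed _ _) _.
  apply: le_trans (Hf x y) _.
  have := ler_wpM2l L0 (ed_le_norm x y); move/le_trans; apply.
  by rewrite mulrA mulrDl mul1r lerDl normr_ge0.
move=> x; apply: (proj2 (@cvgrPdist_lt _ _ _ _ (nbhs_filter x) f (f x))) => e e0.
have : \forall y \near x, `|x - y| < e / (L * m%:R + 1).
  by apply: (@cvgr_dist_lt _ _ _ (nbhs x) (nbhs_filter x) id x (@cvg_id _ (nbhs x))); rewrite divr_gt0.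
apply: filterS => y hy.
apply: le_lt_trans (Hn x y) _.
by rewrite mulrC -ltr_pdivlMr.
Qed.

Lemma At_of (X Y : set 'rV[R]_m) (f g : 'rV[R]_m -> 'rV[R]_m) L :
  0 < L ->
  (forall x, X x -> Y (f x)) -> (forall y, Y y -> X (g y)) ->
  (forall x, X x -> g (f x) = x) -> (forall y, Y y -> f (g y) = y) ->
  (forall x y, eucl_dist (f x) (f y) <= L * eucl_dist x y) ->
  (forall x y, eucl_dist (g x) (g y) <= L * eucl_dist x y) ->
  g 0 = 0 ->
  At_morphism X Y f.
Proof.
move=> L0 XY YX gf fg Hf Hg g0; split => //.
- by apply: continuous_subspaceT; apply: (lip_cont (ltW L0) Hf).
- move=> K KY cK.
  have -> : X `&` f @^-1` K = g @` K.
    apply/seteqP; split => [x [Xx Kfx]|_ [y Ky <-]].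
      by exists (f x) => //; exact: gf.
    by split; [apply: YX; apply: KY | rewrite /= fg //; apply: KY].
  apply: continuous_compact => //.
  by apply: continuous_subspaceT; apply: (lip_cont (ltW L0) Hg).
- exists L, 0; split => //; first exact: ltW.
  by move=> x x' _ _; rewrite addr0.
- exists L^-1, 0; split => //; first by rewrite invr_gt0.
  move=> x Xx; rewrite subr0.
  have := Hg (f x) 0; rewrite gf // g0 => H.
  rewrite -(ler_pM2l L0) mulrA mulfV ?gt_eqF // mul1r //.
Qed.

End Gen.

Section Constr.
Variable R : realType.
Variable n : nat.
Implicit Types x y : 'rV[R]_n.+1.

Definition mu y : R := \big[Num.min/0]_(i | i != ord_max) y ord0 i.
Definition Dx x : 'rV[R]_n.+1 := \row_j (x ord0 j - x ord0 ord_max).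
Definition Tm x : 'rV[R]_n.+1 := \row_j (if j == ord_max
  then x ord0 ord_max + mu (Dx x) else x ord0 j - x ord0 ord_max).
Definition Ti y : 'rV[R]_n.+1 := \row_j (if j == ord_max
  then y ord0 ord_max - mu y else y ord0 j + y ord0 ord_max - mu y).

Lemma mu_ext y y' : (forall i, i != ord_max -> y ord0 i = y' ord0 i) ->
  mu y = mu y'.
Proof. by move=> H; apply: eq_bigr. Qed.

Lemma mu_le y j : j != ord_max -> mu y <= y ord0 j.
Proof. by move=> hj; apply: bigmin_le => //; exact: mem_index_enum. Qed.

Lemma mu_le0 y : mu y <= 0.
Proof. exact: bigmin_le0. Qed.

Lemma mu_ge c y : c <= 0 -> (forall i, i != ord_max -> c <= y ord0 i) ->
  c <= mu y.
Proof.
move=> c0 H; rewrite /mu; elim/big_ind: _ => //.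
by move=> a b ha hb; rewrite le_min ha hb.
Qed.

Lemma mu_lip y y' M : 0 <= M ->
  (forall i, i != ord_max -> `|y ord0 i - y' ord0 i| <= M) ->
  `|mu y - mu y'| <= M.
Proof.
move=> M0 H; rewrite /mu.
apply: (big_ind2 (fun a b => `|a - b| <= M)) => //.
- by rewrite subrr normr0.
- by move=> a a' b b' ha hb; apply: min_lip.
Qed.

Lemma muT x : mu (Tm x) = mu (Dx x).
Proof. by apply: mu_ext => i /negbTE hi; rewrite !mxE hi. Qed.

Lemma TiT x : Ti (Tm x) = x.
Proof.
apply/rowP => j; rewrite !mxE eqxx muT.
case: eqP => [->|_]; ring.
Qed.

Lemma muTi y : mu (Dx (Ti y)) = mu y.
Proof.
apply: mu_ext => i /negbTE hi; rewrite !mxE hi eqxx; ring.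
Qed.

Lemma TTi y : Tm (Ti y) = y.
Proof.
apply/rowP => j; rewrite !mxE muTi eqxx.
case: eqP => [->|_]; ring.
Qed.

Lemma Tm_half x : orthant x -> half_space (Tm x).
Proof.
move=> Ox; rewrite /half_space /= mxE eqxx.
have : - x ord0 ord_max <= mu (Dx x).
  apply: mu_ge; first by rewrite oppr_le0.
  by move=> i _; rewrite mxE; have := Ox i; lra.
lra.
Qed.

Lemma Ti_orth y : half_space y -> orthant (Ti y).
Proof.
rewrite /half_space /orthant /= => hy i; rewrite mxE.
have := mu_le0 y.
case: eqP => [_|/eqP hi] h0; first lra.
have := mu_le y hi; lra.
Qed.

Lemma Tm_lip x y : eucl_dist (Tm x) (Tm y) <= (n.+1%:R * 3) * eucl_dist x y.
Proof.
rewrite -mulrA; apply: ed_le_const => j.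
have hl := ed_coord x y ord_max.
have hj := ed_coord x y j.
have [a1 a2] := absP (x ord0 ord_max - y ord0 ord_max).
have [b1 b2] := absP (x ord0 j - y ord0 j).
have hm : `|mu (Dx x) - mu (Dx y)| <= 2 * eucl_dist x y.
  apply: mu_lip; first by rewrite mulr_ge0 // ed_ge0.
  move=> i _; rewrite !mxE.
  have hi := ed_coord x y i.
  have [c1 c2] := absP (x ord0 i - y ord0 i).
  apply: abs_le; lra.
have [m1 m2] := absP (mu (Dx x) - mu (Dx y)).
rewrite !mxE; case: ifP => _; apply: abs_le; lra.
Qed.

Lemma Ti_lip x y : eucl_dist (Ti x) (Ti y) <= (n.+1%:R * 3) * eucl_dist x y.
Proof.
rewrite -mulrA; apply: ed_le_const => j.
have hl := ed_coord x y ord_max.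
have hj := ed_coord x y j.
have [a1 a2] := absP (x ord0 ord_max - y ord0 ord_max).
have [b1 b2] := absP (x ord0 j - y ord0 j).
have hm : `|mu x - mu y| <= eucl_dist x y.
  by apply: mu_lip; [exact: ed_ge0 | move=> i _; exact: ed_coord].
have [m1 m2] := absP (mu x - mu y).
rewrite !mxE; case: ifP => _; apply: abs_le; lra.
Qed.

Lemma mu0 : mu 0 = 0.
Proof. by apply/eqP; rewrite eq_le mu_le0 mu_ge // => i _; rewrite mxE. Qed.

Lemma Tm0 : Tm 0 = 0.
Proof.
apply/rowP => j; rewrite !mxE.
rewrite (_ : Dx 0 = 0); last by apply/rowP => i; rewrite !mxE subrr.
by rewrite mu0; case: ifP => _; rewrite ?subrr ?addr0.
Qed.

Lemma Ti0 : Ti 0 = 0.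
Proof.
apply/rowP => j; rewrite !mxE mu0; case: ifP => _; ring.
Qed.

End Constr.

Unset Implicit Arguments.

Theorem lemma4p2 (R : realType) (n : nat) :
  exists (T Tinv : 'rV[R]_n.+1 -> 'rV[R]_n.+1),
    [/\ (forall x, orthant x -> Tinv (T x) = x),
        (forall y, half_space y -> T (Tinv y) = y),
        At_morphism (@orthant R n.+1) (@half_space R n) T &
        At_morphism (@half_space R n) (@orthant R n.+1) Tinv].
Proof.
have L0 : 0 < (n.+1%:R * 3 : R) by rewrite mulr_gt0 // ltr0n.
exists (@Tm R n), (@Ti R n); split.
- by move=> x _; exact: TiT.
- by move=> y _; exact: TTi.
- apply: (At_of L0) => //.
  + exact: Tm_half.
  + exact: Ti_orth.
  + by move=> x _; exact: TiT.
  + by move=> y _; exact: TTi.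
  + exact: Tm_lip.
  + exact: Ti_lip.
  + exact: Ti0.
- apply: (At_of L0) => //.
  + exact: Ti_orth.
  + exact: Tm_half.
  + by move=> x _; exact: TTi.
  + by move=> y _; exact: TiT.
  + exact: Ti_lip.
  + exact: Tm_lip.
  + exact: Tm0.
Qed.
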